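(* For every infinite cardinal $\kappa$, there is a subalgebra of the free Boolean algebra $\mathrm{Fr}(\kappa^+)$ which does not have the $\kappa$-FN.
   Context: $\mathrm{Fr}(\kappa^+)$ denotes the free Boolean algebra on $\kappa^+$ generators. For an infinite cardinal $\kappa$, a Boolean algebra $B$ has the $\kappa$-Freese–Nation property ($\kappa$-FN) if there is a map $f:B\to[B]^{<\kappa}$ such that for all $a,b\in B$ with $a\le b$ there is $c\in f(a)\cap f(b)$ with $a\le c\le b$. *)

(* Defs.v *)
From HB Require Import structures.
From mathcomp Require Import all_boot.
From mathcomp Require Import boolp classical_sets cardinality.
Set Implicit Arguments. Unset Strict Implicit. Unset Printing Implicit Defensive.
Local Open Scope classical_set_scope.
Local Open Scope card_scope.

Definition set_subalgebra (T : Type) (B : set (set T)) : Prop :=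
  [/\ B set0, B setT,
      (forall A, B A -> B (~` A)),
      (forall A C, B A -> B C -> B (A `|` C)) &
      (forall A C, B A -> B C -> B (A `&` C))].

(* Fr(X): the free Boolean algebra on the generators X, realised (Stone)
   as the subalgebra of P(2^X) generated by the independent coordinate sets
   { f : X -> bool | f x = true }, x in X. *)
Definition coord_gens (X : Type) : set (set (X -> bool)) :=
  range (fun x : X => [set f : X -> bool | f x = true]).

Definition Fr (X : Type) : set (set (X -> bool)) :=
  smallest (set_subalgebra (T:=X -> bool)) (@coord_gens X).

(* L has cardinality kappa^+ where kappa = |K|: |K| < |L| and every subset
   of L of cardinality > |K| has cardinality |L|. *)
Definition is_successor_card (K L : Type) : Prop :=
  ([set: K] #<= [set: L]) /\ ~ ([set: L] #<= [set: K]) /\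
  (forall A : set L, ~ (A #<= [set: K]) -> [set: L] #<= A).

(* kappa-Freese-Nation property of a Boolean algebra B of sets (order = inclusion),
   kappa = |K|; [B]^{<kappa} = subsets of B of cardinality < |K|. *)
Definition kappa_FN (K T : Type) (B : set (set T)) : Prop :=
  exists f : set T -> set (set T),
    (forall a, B a -> f a `<=` B /\ ~ ([set: K] #<= f a)) /\
    (forall a b, B a -> B b -> a `<=` b ->
       exists c, f a c /\ f b c /\ a `<=` c /\ c `<=` b).

Arguments coord_gens X : clear implicits.
Arguments Fr X : clear implicits.
Arguments set_subalgebra {T} B.
Arguments kappa_FN K {T} B.
Arguments is_successor_card K L : clear implicits.

(* Main.v *)
Require Import Defs.
From mathcomp Require Import all_boot.
From mathcomp Require Import boolp classical_sets cardinality.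
From mathcomp Require Import functions.
Set Implicit Arguments. Unset Strict Implicit. Unset Printing Implicit Defensive.
Local Open Scope classical_set_scope.
Local Open Scope card_scope.



Definition le T U (A : set T) (B : set U) :=
  exists f : T -> U, (forall x, A x -> B (f x)) /\
    (forall x y, A x -> A y -> f x = f y -> x = y).

Lemma le_card T U (A : set T) (B : set U) : le A B -> A #<= B.
Proof.
move=> [f [fAB finj]].
have : $|{injfun A >-> B}|.
  apply/injfunPex; exists f; first by move=> x; exact: fAB.
  by move=> x y /set_mem Ax /set_mem Ay; exact: finj.
by case=> g; exact: inj_card_le g.
Qed.

Lemma card_le_le T U (A : set T) (B : set U) (u0 : U) : A #<= B -> le A B.
Proof.
move/card_leP=> [g].
exists (fun x => match pselect (A x) with
  | left h => val (g (SigSub (mem_set h))) | right _ => u0 end).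
split.
  move=> x Ax; case: pselect => // h; exact: set_mem (valP _).
move=> x y Ax Ay; case: pselect => // hx; case: pselect => // hy.
move=> /val_inj /(@inj _ _ _ g) -/(_ (in_setT _) (in_setT _)).
by move=> /(congr1 val).
Qed.

Lemma le_refl T (A : set T) : le A A.
Proof. by exists id. Qed.

Lemma le_trans T U V (A : set T) (B : set U) (C : set V) :
  le A B -> le B C -> le A C.
Proof.
move=> [f [f1 f2]] [g [g1 g2]]; exists (g \o f); split => [x Ax|x y Ax Ay /= e].
  exact/g1/f1.
by apply: f2 => //; apply: g2 => //; exact: f1.
Qed.

Lemma le_sub T (A B : set T) : A `<=` B -> le A B.
Proof. by move=> AB; exists id; split => // x; exact: AB. Qed.

Lemma le_cover T U (A : set T) (B : set U) (t0 : T) :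
  le A B -> exists s : U -> T, A `<=` s @` B.
Proof.
move=> [f [f1 f2]].
exists (fun y => match pselect (exists x, A x /\ f x = y) with
  | left h => proj1_sig (cid h) | right _ => t0 end).
move=> x Ax; exists (f x); first exact: f1.
case: pselect => [h|[]]; last by exists x.
have [Az e] := proj2_sig (cid h); exact: f2.
Qed.

Lemma cover_le T U (A : set T) (B : set U) (u0 : U) (s : U -> T) :
  A `<=` s @` B -> le A B.
Proof.
move=> AsB.
exists (fun x => match pselect (exists y, B y /\ s y = x) with
  | left h => proj1_sig (cid h) | right _ => u0 end).
split.
  move=> x Ax; case: (pselect (exists y, B y /\ s y = x)) => [h|[]].
    by have [] := proj2_sig (cid h).
  by case: (AsB _ Ax) => y By e; exists y.
move=> x y Ax Ay; case: (pselect (exists y, B y /\ s y = x)) => [h|[]]; last first.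
  by case: (AsB _ Ax) => z Bz e; exists z.
case: (pselect (exists y', B y' /\ s y' = y)) => [h'|[]]; last first.
  by case: (AsB _ Ay) => z Bz e; exists z.
have [_ ez] := proj2_sig (cid h); have [_ ez'] := proj2_sig (cid h').
by move=> zz; rewrite -ez -ez' zz.
Qed.

Lemma le_X T U T' U' (A : set T) (B : set U) (A' : set T') (B' : set U') :
  le A A' -> le B B' -> le (A `*` B) (A' `*` B').
Proof.
move=> [f [f1 f2]] [g [g1 g2]].
exists (fun p => (f p.1, g p.2)); split.
  by move=> [x y] [/= Ax By]; split; [exact: f1|exact: g1].
move=> [x y] [x' y'] [/= Ax By] [/= Ax' By'] [e1 e2].
by rewrite (f2 _ _ Ax Ax' e1) (g2 _ _ By By' e2).
Qed.

Lemma le_total T U (A : set T) (B : set U) (t0 : T) (u0 : U) :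
  le A B \/ le B A.
Proof.
pose P := [set R : set (T * U) | [/\ (forall x y, R (x, y) -> A x /\ B y),
   (forall x y y', R (x, y) -> R (x, y') -> y = y') &
   (forall x x' y, R (x, y) -> R (x', y) -> x = x')]].
have [M [[M1 M2 M3] Mmax]] : exists M, P M /\ forall N, M `<` N -> ~ P N.
  apply: Zorn_bigcup => F FP Ftot; split.
  - by move=> x y [R FR Rxy]; have [+ _ _] := FP _ FR; apply.
  - move=> x y y' [R FR Rxy] [R' FR' Rxy'].
    have [RR'|R'R] := Ftot _ _ FR FR'.
      by have [_ H _] := FP _ FR'; apply: (H x); [exact: RR'|exact: Rxy'].
    by have [_ H _] := FP _ FR; apply: (H x); [exact: Rxy|exact: R'R].
  - move=> x x' y [R FR Rxy] [R' FR' Rxy'].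
    have [RR'|R'R] := Ftot _ _ FR FR'.
      by have [_ _ H] := FP _ FR'; apply: (H _ _ y); [exact: RR'|exact: Rxy'].
    by have [_ _ H] := FP _ FR; apply: (H _ _ y); [exact: Rxy|exact: R'R].
have [domA|] := pselect (forall x, A x -> exists y, M (x, y)).
  left; have /choice[g hg] : forall x, exists y, A x -> M (x, y).
    move=> x. have [Ax|nAx] := pselect (A x).
      by have [y ?] := domA _ Ax; exists y.
    by exists u0.
  exists g; split.
    by move=> x Ax; have [] := M1 _ _ (hg _ Ax).
  by move=> x y Ax Ay e; apply: (M3 _ _ (g x)) => //; [exact: hg|rewrite e; exact: hg].
move=> /existsNP[x0 /not_implyP[Ax0 nx0]].
have [ranB|] := pselect (forall y, B y -> exists x, M (x, y)).
  right; have /choice[g hg] : forall y, exists x, B y -> M (x, y).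
    move=> y. have [By|nBy] := pselect (B y).
      by have [x ?] := ranB _ By; exists x.
    by exists t0.
  exists g; split.
    by move=> y By; have [] := M1 _ _ (hg _ By).
  by move=> x y Ax Ay e; apply: (M2 (g x)) => //; [exact: hg|rewrite e; exact: hg].
move=> /existsNP[y0 /not_implyP[By0 ny0]].
exfalso; apply: (Mmax (M `|` [set (x0, y0)])).
  split; first by move=> z Mz; left.
  move=> /(_ (x0, y0) (or_intror erefl)) Mxy.
  by apply: nx0; exists y0.
split.
- by move=> x y [/M1//|[-> ->]].
- move=> x y y' [Mxy|[ex ey]] [Mxy'|[ex' ey']]; subst => //.
  + exact: M2 Mxy Mxy'.
  + by exfalso; apply: nx0; exists y.
  + by exfalso; apply: nx0; exists y'.
- move=> x x' y [Mxy|[ex ey]] [Mxy'|[ex' ey']]; subst => //.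
  + exact: M3 Mxy Mxy'.
  + by exfalso; apply: ny0; exists x.
  + by exfalso; apply: ny0; exists x'.
Qed.




Definition Xs T (G : set ((T * T) * T)) := [set x | exists z, G ((x, x), z)].

Definition good T (A : set T) (G : set ((T * T) * T)) :=
 [/\ Xs G `<=` A /\ (exists x0 x1, [/\ Xs G x0, Xs G x1 & x0 <> x1]),
     (forall a b z, G ((a, b), z) -> [/\ Xs G a, Xs G b & Xs G z]),
     (forall a b, Xs G a -> Xs G b -> exists z, G ((a, b), z)),
     (forall p z z', G (p, z) -> G (p, z') -> z = z') &
     (forall p p' z, G (p, z) -> G (p', z) -> p = p')].

Lemma nat2_le : le [set: nat * nat] [set: nat].
Proof.
have : [set: nat * nat] #<= [set: nat].
  by have := card_nat2; rewrite card_eq_le => /andP[].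
exact: card_le_le 0%N.
Qed.

Lemma good0 T (A : set T) : le [set: nat] A -> exists G, good A G.
Proof.
move=> [h [hA hinj]]; have [pr [_ prinj]] := nat2_le.
have hi : forall i j, h i = h j -> i = j by move=> i j; apply: hinj.
have pri : forall p q, pr p = pr q -> p = q by move=> p q; apply: prinj.
pose G0 := [set q : (T * T) * T | exists i j, q = ((h i, h j), h (pr (i, j)))].
have XG0 x : Xs G0 x <-> exists i, x = h i.
  split=> [[z [i [j [e1 _ _]]]]|[i ->]]; first by exists i.
  by exists (h (pr (i, i))); exists i, i.
exists G0; split.
- split; first by move=> x /XG0[i ->]; exact: hA.
  exists (h 0%N), (h 1%N); split; try by apply/XG0; eexists.
  by move=> /hi.
- move=> a b z [i [j [-> -> ->]]]; split; apply/XG0; eexists; reflexivity.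
- move=> a b /XG0[i ->] /XG0[j ->]; exists (h (pr (i, j))); exists i, j.
  by [].
- move=> p z z' [i [j [-> ->]]] [i' [j' [/hi -> /hi -> ->]]] //.
- move=> p p' z [i [j [-> ->]]] [i' [j' [-> /hi /pri [-> ->]]]] //.
Qed.

Lemma hessenberg T (A : set T) : le [set: nat] A -> le (A `*` A) A.
Proof.
move=> leNA.
pose P := [set G : set ((T * T) * T) | G = set0 \/ good A G].
have [M [PM Mmax]] : exists M, P M /\ forall N, M `<` N -> ~ P N.
  apply: Zorn_bigcup => F FP Ftot.
  have goodF G q : F G -> G q -> good A G.
    by move=> FG Gq; case: (FP _ FG) => // G0; rewrite G0 in Gq.
  have [[G1 [FG1 [q1 G1q1]]]|none] :=
      pselect (exists G, F G /\ exists q, G q); last first.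
    left; apply/seteqP; split=> // q [G FG Gq]; apply: none.
    by exists G; split=> //; exists q.
  right.
  have XU x : Xs (\bigcup_(X in F) X) x -> exists2 G, F G & Xs G x.
    by move=> [z [G FG Gx]]; exists G => //; exists z.
  have UX G x : F G -> Xs G x -> Xs (\bigcup_(X in F) X) x.
    by move=> FG [z Gz]; exists z, G.
  have [[G1A [y0 [y1 [G1y0 G1y1 y01]]]] _ _ _ _] := goodF _ _ FG1 G1q1.
  split.
  - split; last by exists y0, y1; split => //; exact: UX G1y0 || exact: UX G1y1.
    move=> x /XU[G FG [z Gz]].
    by have [[+ _] _ _ _ _] := goodF _ _ FG Gz; apply; exists z.
  - move=> a b z [G FG Gz]; have [_ + _ _ _] := goodF _ _ FG Gz.
    by move=> /(_ _ _ _ Gz)[Ga Gb Gz']; split; exact: UX Ga || exact: UX Gb || exact: UX Gz'.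
  - move=> a b /XU[G FG [za Ga]] /XU[G' FG' [zb Gb]].
    have [GG'|G'G] := Ftot _ _ FG FG'.
      have [_ _ + _ _] := goodF _ _ FG' Gb.
      move=> /(_ a b)[||z Gz]; [by exists za; exact: GG'|by exists zb|].
      by exists z, G'.
    have [_ _ + _ _] := goodF _ _ FG Ga.
    move=> /(_ a b)[||z Gz]; [by exists za|by exists zb; exact: G'G|].
    by exists z, G.
  - move=> p z z' [G FG Gz] [G' FG' Gz'].
    have [GG'|G'G] := Ftot _ _ FG FG'.
      by have [_ _ _ H _] := goodF _ _ FG' Gz'; apply: (H p); [exact: GG'|].
    by have [_ _ _ H _] := goodF _ _ FG Gz; apply: (H p); [|exact: G'G].
  - move=> p p' z [G FG Gz] [G' FG' Gz'].
    have [GG'|G'G] := Ftot _ _ FG FG'.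
      by have [_ _ _ _ H] := goodF _ _ FG' Gz'; apply: (H _ _ z); [exact: GG'|].
    by have [_ _ _ _ H] := goodF _ _ FG Gz; apply: (H _ _ z); [|exact: G'G].
have gM : good A M.
  case: PM => // M0; have [G0 gG0] := good0 leNA.
  exfalso; apply: (Mmax G0); last by right.
  rewrite M0; split=> // sub; have [[_ [x0 [x1 [[z Gz] _ _]]]] _ _ _ _] := gG0.
  exact: (sub _ Gz).

set X := Xs M.
have [[XA [x0 [x1 [Xx0 Xx1 x01]]]] Mc Mtot Mfun Minj] := gM.
have /choice[g hg] : forall p : T * T, exists z, X p.1 -> X p.2 -> M (p, z).
  move=> [a b]; have [Xa|nXa] := pselect (X a); last by exists a.
  have [Xb|nXb] := pselect (X b); last by exists a.
  by have [z ?] := Mtot _ _ Xa Xb; exists z.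
have gX p : X p.1 -> X p.2 -> X (g p).
  by case: p => a b Xa Xb; have [] := Mc _ _ _ (hg (a, b) Xa Xb).
have ginj p p' : X p.1 -> X p.2 -> X p'.1 -> X p'.2 -> g p = g p' -> p = p'.
  move=> Xa Xb Xa' Xb' e.
  have := Minj _ _ _ (hg p Xa Xb); rewrite e => /(_ _ (hg p' Xa' Xb')).
  by [].
have [[h [hXA hinj]]|[k [kAX kinj]]] := le_total X (A `\` X) x0 x0.
  exfalso.
  pose Y := h @` X.
  have YAX y : Y y -> A y /\ ~ X y by move=> [x Xx <-]; exact: hXA.
  have /choice[hi hhi] : forall y, exists x, Y y -> X x /\ h x = y.
    move=> y; have [[x Xx e]|nY] := pselect (Y y); last by exists y.
    by exists x.
  pose t a := if `[< X a >] then (x0, a) else (x1, hi a).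
  have tX a : X a \/ Y a -> X (t a).1 /\ X (t a).2.
    rewrite /t; case: (asboolP (X a)) => //= nXa [//|Ya].
    by split=> //; have [] := hhi _ Ya.
  have tinj a a' : X a \/ Y a -> X a' \/ Y a' -> t a = t a' -> a = a'.
    rewrite /t; case: (asboolP (X a)) => Xa; case: (asboolP (X a')) => Xa' //=.
    - by move=> _ _ [].
    - by move=> _ _ [e]; exfalso; exact: x01 e.
    - by move=> _ _ [e]; exfalso; exact: x01 (esym e).
    - move=> [//|Ya] [//|Ya'] [e].
      by have [_ <-] := hhi _ Ya; have [_ <-] := hhi _ Ya'; rewrite e.
  pose phi p := h (g (g (t p.1), g (t p.2))).
  have phiY p : X p.1 \/ Y p.1 -> X p.2 \/ Y p.2 -> Y (phi p).
    move=> /tX[u1 u2] /tX[v1 v2]; exists (g (g (t p.1), g (t p.2))) => //.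
    exact: (gX (_, _) (gX _ u1 u2) (gX _ v1 v2)).
  have phiinj p p' : X p.1 \/ Y p.1 -> X p.2 \/ Y p.2 ->
      X p'.1 \/ Y p'.1 -> X p'.2 \/ Y p'.2 -> phi p = phi p' -> p = p'.
    move=> H1 H2 H1' H2'.
    have [a1 a2] := tX _ H1; have [b1 b2] := tX _ H2.
    have [a1' a2'] := tX _ H1'; have [b1' b2'] := tX _ H2'.
    rewrite /phi => e.
    have Xt1 := gX (_, _) (gX _ a1 a2) (gX _ b1 b2).
    have Xt2 := gX (_, _) (gX _ a1' a2') (gX _ b1' b2').
    move: (hinj _ _ Xt1 Xt2 e).
    move=> /ginj-/(_ (gX _ a1 a2) (gX _ b1 b2) (gX _ a1' a2') (gX _ b1' b2')) [].
    move=> /ginj-/(_ a1 a2 a1' a2') /tinj-/(_ H1 H1') e1.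
    move=> /ginj-/(_ b1 b2 b1' b2') /tinj-/(_ H2 H2') e2.
    by case: p p' e1 e2 {H1 H2 H1' H2' Xt1 Xt2 e a1 a2 b1 b2 a1' a2' b1' b2'} => [? ?] [? ?] /= -> ->.
  pose N (p : T * T) := [/\ X p.1 \/ Y p.1, X p.2 \/ Y p.2 & ~ (X p.1 /\ X p.2)].
  pose G' := M `|` [set q | N q.1 /\ q.2 = phi q.1].
  have XY x : X x \/ Y x -> Xs G' x.
    case=> [[z Mz]|Yx]; first by exists z; left.
    exists (phi (x, x)); right; split => //; split => //=; try by right.
    by have [_ +] := YAX _ Yx; move=> nX [].
  have G'XY x : Xs G' x -> X x \/ Y x.
    by move=> [z [Mz|[[]]]]; [left; exists z|].
  apply: (Mmax G').
    split; first by move=> q Mq; left.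
    move=> sub; have Yh : Y (h x0) by exists x0.
    have [_ nX] := YAX _ Yh; apply: nX.
    have [z Mz] : Xs G' (h x0) by apply: XY; right.
    by move/sub: Mz => Mz; exists z.
  right; split.
  - split; last by exists x0, x1; split => //; apply: XY; left.
    by move=> x /G'XY[/XA //|/YAX[]].
  - move=> a b z [Mz|[[Ha Hb _] /= ->]].
      by have [? ? ?] := Mc _ _ _ Mz; split; apply: XY; left.
    split; apply: XY => //; right; exact: (phiY (a, b)).
  - move=> a b /G'XY Ha /G'XY Hb.
    have [[Xa Xb]|nXab] := pselect (X a /\ X b).
      by have [z Mz] := Mtot _ _ Xa Xb; exists z; left.
    by exists (phi (a, b)); right.
  - move=> p z z' [Mz|[[H1 H2 H3] /= ->]] [Mz'|[[H1' H2' H3'] /= ->]] //.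
    + exact: Mfun Mz Mz'.
    + by exfalso; apply: H3'; case: p Mz {H1' H2'} => a b /Mc[].
    + by exfalso; apply: H3; case: p Mz' {H1 H2} => a b /Mc[].
  - move=> p p' z [Mz|[[H1 H2 H3] /= ez]] [Mz'|[[H1' H2' H3'] /= ez']].
    + exact: Minj Mz Mz'.
    + exfalso; have := phiY _ H1' H2'; rewrite -ez' => /YAX[_]; apply.
      by case: p Mz {ez'} => a b /Mc[].
    + exfalso; have := phiY _ H1 H2; rewrite -ez => /YAX[_]; apply.
      by case: p' Mz' {ez} => a b /Mc[].
    + by apply: phiinj => //; rewrite -ez -ez'.
pose e a := g (if `[< X a >] then (x0, a) else (x1, k a)).
have eX a : A a -> X (e a).
  rewrite /e; case: (asboolP (X a)) => Xa Aa; apply: gX => //=.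
  exact: kAX.
have einj a a' : A a -> A a' -> e a = e a' -> a = a'.
  rewrite /e; case: (asboolP (X a)) => Xa; case: (asboolP (X a')) => Xa' Aa Aa' /ginj.
  - by move=> /(_ Xx0 Xa Xx0 Xa') [].
  - by move=> /(_ Xx0 Xa Xx1 (kAX _ (conj Aa' Xa'))) [] /x01.
  - by move=> /(_ Xx1 (kAX _ (conj Aa Xa)) Xx0 Xa') [] /esym /x01.
  - move=> /(_ Xx1 (kAX _ (conj Aa Xa)) Xx1 (kAX _ (conj Aa' Xa'))).
    move=> E; case: E => E.
    apply: (kinj a a'); [by split|by split|exact: E].
exists (fun p => g (e p.1, e p.2)); split.
  by move=> [a b] [/= Aa Ab]; apply: XA; apply: gX; exact: eX.
move=> [a b] [a' b'] [/= Aa Ab] [/= Aa' Ab'] /ginj.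
move=> /(_ (eX _ Aa) (eX _ Ab) (eX _ Aa') (eX _ Ab')) [] /einj-/(_ Aa Aa') ->.
by move=> /einj-/(_ Ab Ab') ->.
Qed.




Section BA.
Variables (L : Type) (o : L).

Lemma FrP c : Fr L c <-> forall M : set (set (L -> bool)),
  set_subalgebra M -> coord_gens L `<=` M -> M c.
Proof.
split; first by move=> Frc M sM gM; apply: Frc; split.
by move=> H M [sM gM]; apply: H.
Qed.

Lemma Fr_ind (M : set (set (L -> bool))) :
  set_subalgebra M -> coord_gens L `<=` M -> Fr L `<=` M.
Proof. by move=> sM gM c /FrP; apply. Qed.

Lemma Fr_sub : set_subalgebra (Fr L).
Proof.
split.
- by apply/FrP => M [].
- by apply/FrP => M [].
- by move=> A /FrP FA; apply/FrP => M sM gM; case: sM (FA M sM gM) => _ _ + _ _; apply.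
- move=> A C /FrP FA /FrP FC; apply/FrP => M sM gM.
  by case: sM (FA M sM gM) (FC M sM gM) => _ _ _ + _; apply.
- move=> A C /FrP FA /FrP FC; apply/FrP => M sM gM.
  by case: sM (FA M sM gM) (FC M sM gM) => _ _ _ _ +; apply.
Qed.

Lemma Fr_gen x : Fr L [set f : L -> bool | f x = true].
Proof. by apply/FrP => M _ gM; apply: gM; exists x. Qed.

Definition supp_fin (c : set (L -> bool)) := exists S : set L, finite_set S /\
  forall p q : L -> bool, (forall y, S y -> p y = q y) -> (c p <-> c q).

Lemma Fr_supp c : Fr L c -> supp_fin c.
Proof.
apply: Fr_ind; last first.
  move=> _ [x _ <-]; exists [set x]; split; first exact: finite_set1.
  by move=> p q /(_ x erefl) /= ->.
split.
- by exists set0; split; [exact: finite_set0|].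
- by exists set0; split; [exact: finite_set0|].
- move=> A [S [fS HS]]; exists S; split => // p q /HS e /=.
  by split=> nA Aq; apply: nA; apply/e.
- move=> A C [S [fS HS]] [S' [fS' HS']]; exists (S `|` S'); split.
    by rewrite finite_setU.
  move=> p q e; have /HS eA : forall y, S y -> p y = q y by move=> y Sy; apply: e; left.
  have /HS' eC : forall y, S' y -> p y = q y by move=> y Sy; apply: e; right.
  by split=> -[?|?]; [left; apply/eA|right; apply/eC|left; apply/eA|right; apply/eC].
- move=> A C [S [fS HS]] [S' [fS' HS']]; exists (S `|` S'); split.
    by rewrite finite_setU.
  move=> p q e; have /HS eA : forall y, S y -> p y = q y by move=> y Sy; apply: e; left.
  have /HS' eC : forall y, S' y -> p y = q y by move=> y Sy; apply: e; right.
  by split=> -[? ?]; split; (apply/eA || apply/eC).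
Qed.

Definition pt1 : L -> bool := fun y => `[< y = o >].
Definition pt2 : L -> bool := fun y => ~~ `[< y = o >].
Definition upd (p : L -> bool) (y : L) (v : bool) : L -> bool :=
  fun z => if `[< z = y >] then v else p z.

Definition Bset := [set c : set (L -> bool) | Fr L c /\ (c pt1 <-> c pt2)].
Definition Pc (c : set (L -> bool)) :=
  [set y | y <> o /\ ~ (c pt1 <-> c (upd pt1 y true))].
Definition Qc (c : set (L -> bool)) :=
  [set y | y <> o /\ ~ (c pt2 <-> c (upd pt2 y false))].
Definition aa (x : L) := [set f : L -> bool | f o = true] `&` [set f | f x = true].
Definition bb (x : L) := [set f : L -> bool | f o = true] `|` [set f | f x = true].

Lemma Bset_sub : set_subalgebra Bset.
Proof.
have [F0 FT FC FU FI] := Fr_sub.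
split.
- by split => //; split.
- by split => //; split.
- by move=> A [FA e]; split; [exact: FC|rewrite /= e].
- move=> A C [FA eA] [FC' eC]; split; [exact: FU|].
  by rewrite /= eA eC.
- move=> A C [FA eA] [FC' eC]; split; [exact: FI|].
  by rewrite /= eA eC.
Qed.

Lemma Bset_Fr : Bset `<=` Fr L.
Proof. by move=> c []. Qed.

Lemma Pc_fin c : Fr L c -> finite_set (Pc c).
Proof.
move=> /Fr_supp[S [fS HS]]; apply: sub_finite_set fS => y [yo].
apply: contra_notP => nSy; apply/HS => z Sz; rewrite /upd.
by rewrite asboolF // => zy; apply: nSy; rewrite -zy.
Qed.

Lemma Qc_fin c : Fr L c -> finite_set (Qc c).
Proof.
move=> /Fr_supp[S [fS HS]]; apply: sub_finite_set fS => y [yo].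
apply: contra_notP => nSy; apply/HS => z Sz; rewrite /upd.
by rewrite asboolF // => zy; apply: nSy; rewrite -zy.
Qed.

Lemma aa_B x : x <> o -> Bset (aa x).
Proof.
move=> xo; split.
  by have [_ _ _ _ FI] := Fr_sub; apply: FI; exact: Fr_gen.
rewrite /aa /pt1 /pt2 /=; split; last by move=> [+ _]; rewrite asboolT.
by move=> [_]; rewrite asboolF.
Qed.

Lemma bb_B x : x <> o -> Bset (bb x).
Proof.
move=> xo; split.
  by have [_ _ _ FU _] := Fr_sub; apply: FU; exact: Fr_gen.
rewrite /bb /pt1 /pt2 /=; split=> _; first by right; rewrite asboolF.
by left; rewrite asboolT.
Qed.

Lemma aa_bb x y : aa x `<=` bb y.
Proof. by move=> f [? _]; left. Qed.

Lemma interp x y c : x <> o -> y <> o -> Bset c -> aa x `<=` c -> c `<=` bb y ->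
  Pc c x \/ Qc c y.
Proof.
move=> xo yo [_ e12] ac cb.
have cg : c (upd pt1 x true).
  apply: ac; rewrite /aa /upd /pt1 /=; split.
    by rewrite (asboolF (P := o = x)) ?asboolT // => ox; apply: xo.
  by rewrite asboolT.
have nch : ~ c (upd pt2 y false).
  move=> /cb; rewrite /bb /upd /pt2 /= => -[].
    by rewrite (asboolF (P := o = y)) ?asboolT // => ox; apply: yo.
  by rewrite asboolT.
have [c1|nc1] := pselect (c pt1).
  right; split => // e; apply: nch; apply/e; exact/e12.
left; split => // e; apply: nc1; exact/e.
Qed.

End BA.




Lemma card_le_inh T U (A : set T) (B : set U) t : A #<= B -> A t -> exists u, B u.
Proof.
move=> /card_leP[g] At; exists (val (g (SigSub (mem_set At)))).
exact: set_mem (valP _).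
Qed.

Theorem proposition7p6 (K L : Type) :
  infinite_set [set: K] -> is_successor_card K L ->
  exists B : set (set (L -> bool)),
    B `<=` Fr L /\ set_subalgebra B /\ ~ kappa_FN K B.
Proof.
move=> infK [KL [nLK _]].
have [k0 _] := infinite_setN0 infK.
have [l0 _] := card_le_inh (t := k0) KL I.
have leNK : le [set: nat] [set: K] by apply: (card_le_le k0); exact/infiniteP.
have [e [_ einj]] := card_le_le l0 KL.
have [o no] : exists o, ~ range e o.
  have [//|H] := pselect (exists o, ~ range e o).
  exfalso; apply: nLK; apply: le_card; apply: (cover_le k0 (s := e)).
  move=> y _; have [//|nr] := pselect (range e y).
  by exfalso; apply: H; exists y.
have eo k : e k <> o by move=> ek; apply: no; exists k.
exists (Bset o); split; first exact: Bset_Fr.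
split; first exact: Bset_sub.
move=> [f [fB fN]].
have fsmall a : Bset o a -> ~ le [set: K] (f a).
  by move=> Ba /le_card; have [_ +] := fB a Ba.
have fle a : Bset o a -> le (f a) [set: K].
  move=> Ba; have [//|H] := le_total (f a) [set: K] set0 k0.
  by exfalso; exact: fsmall Ba H.
have fBc a c : Bset o a -> f a c -> Bset o c.
  by move=> Ba fac; have [+ _] := fB a Ba; apply.
have pairs x y : x <> o -> y <> o ->
    exists c, [/\ f (aa o x) c, f (bb o y) c & Pc o c x \/ Qc o c y].
  move=> xo yo.
  have [c [fac [fbc [ac cb]]]] := fN _ _ (aa_B xo) (bb_B yo) (@aa_bb _ o x y).
  exists c; split => //; apply: interp => //; exact: fBc (aa_B xo) fac.
pose S x := \bigcup_(c in f (aa o x)) Qc o c.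
pose T y := \bigcup_(c in f (bb o y)) Pc o c.
have Ssmall x : x <> o -> ~ le [set: K] (S x).
  move=> xo leKS.
  have Bax := aa_B xo.
  have [fin|infa] := pselect (finite_set (f (aa o x))).
    apply: infK; apply: (card_le_finite (le_card leKS)).
    apply: bigcup_finite => // c fc; apply: Qc_fin.
    exact: Bset_Fr (fBc _ _ Bax fc).
  have leNf : le [set: nat] (f (aa o x)).
    by apply: (card_le_le set0); exact/infiniteP.
  have /choice[en hen] : forall c, exists s : nat -> L,
      f (aa o x) c -> Qc o c `<=` s @` [set: nat].
    move=> c; have [fc|nfc] := pselect (f (aa o x) c); last by exists (fun=> o).
    have cQ : countable (Qc o c).
      apply: finite_set_countable; apply: Qc_fin.
      exact: Bset_Fr (fBc _ _ Bax fc).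
    have [s hs] := le_cover o (card_le_le 0%N cQ).
    by exists s.
  have : le (S x) (f (aa o x) `*` [set: nat]).
    apply: (cover_le (set0, 0%N) (s := fun p => en p.1 p.2)).
    move=> z [c fc Qz]; have [n _ <-] := hen c fc z Qz.
    by exists (c, n).
  move=> /le_trans /(_ (le_X (le_refl _) leNf)) /le_trans /(_ (hessenberg leNf)).
  by move=> H; apply: (fsmall _ Bax); exact: le_trans leKS H.
have hK := hessenberg leNK.
pose Bad := range e `|` [set o] `|` \bigcup_(k in [set: K]) T (e k).
have leBad : le Bad [set: K].
  have /choice[cov hcov] : forall y, exists s : K -> set (L -> bool),
      y <> o -> f (bb o y) `<=` s @` [set: K].
    move=> y; have [yo|] := pselect (y <> o); last by exists (fun=> set0).
    have [s hs] := le_cover set0 (fle _ (bb_B yo)).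
    by exists s.
  have /choice[en hen] : forall c, exists s : nat -> L,
      Fr L c -> Pc o c `<=` s @` [set: nat].
    move=> c; have [Fc|nFc] := pselect (Fr L c); last by exists (fun=> o).
    have cP : countable (Pc o c) by apply: finite_set_countable; exact: Pc_fin.
    have [s hs] := le_cover o (card_le_le 0%N cP).
    by exists s.
  pose F (p : K * (K * nat)) : L := match p.2.2 with
    | 0 => e p.1 | 1 => o | n.+2 => en (cov (e p.1) p.2.1) n end.
  have : le Bad [set: K * (K * nat)].
    apply: (cover_le (k0, (k0, 0%N)) (s := F)).
    move=> z [[[k _ <-]|->]|[k _ [c fc Pz]]].
    - by exists (k, (k, 0%N)).
    - by exists (k0, (k0, 1%N)).
    - have [k2 _ ck2] := hcov (e k) (eo k) c fc.
      have Fc : Fr L c by apply: Bset_Fr; exact: fBc (bb_B (eo k)) fc.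
      have [n _ enn] := hen c Fc z Pz.
      by exists (k, (k2, n.+2)) => //; rewrite /F /= ck2.
  move=> /le_trans; apply.
  apply: le_trans (le_sub (B := [set: K] `*` ([set: K] `*` [set: nat])) _) _.
    by move=> ? _.
  apply: le_trans (le_X (le_refl [set: K]) (le_X (le_refl [set: K]) leNK)) _.
  apply: le_trans (le_X (le_refl [set: K]) hK) _.
  exact: hK.
have [a na] : exists a, ~ Bad a.
  have [//|H] := pselect (exists a, ~ Bad a).
  exfalso; apply: nLK; apply: le_card; apply: le_trans leBad.
  apply: le_sub => y _; have [//|nr] := pselect (Bad y).
  by exfalso; apply: H; exists y.
have ao : a <> o by move=> ao; apply: na; left; right.
apply: (Ssmall a ao); exists e; split => // k _.
have [c [fac fbc [Pa|Qk]]] := pairs a (e k) ao (eo k).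
  by exfalso; apply: na; right; exists k => //; exists c.
by exists c.
Qed.
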